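(* Let $k\geq1$ and consider real $2k\times2k$ matrices $K,P,A$ where $K$ is an invertible skew-symmetric matrix, $P$ is an orthogonal matrix, $A=\mathrm{diag}(-\alpha_1^2,\dots,-\alpha_{2k}^2)$ with all $\alpha_i\neq0$, and let $\alpha=\pm\sqrt{\alpha_1^2+\dots+\alpha_{2k}^2}$. Suppose $K^2=P^{-1}AP+A\quad\text{and}\quad \alpha K=AP-P^{-1}A.$ Then $k=1$, and there exist $\epsilon,\eta\in\{1,-1\}$ such that $A=\begin{pmatrix}-\alpha_1^2&0\\0&-\alpha_2^2\end{pmatrix},\quad K=\begin{pmatrix}0&\epsilon\sqrt{\alpha_1^2+\alpha_2^2}\\-\epsilon\sqrt{\alpha_1^2+\alpha_2^2}&0\end{pmatrix},\quad P=\begin{pmatrix}0&-\eta\epsilon\\\eta\epsilon&0\end{pmatrix}.$ *)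

(* Defs.v *)
From HB Require Import structures.
From mathcomp Require Import all_boot all_order all_algebra.
From mathcomp Require Import reals.
Set Implicit Arguments. Unset Strict Implicit. Unset Printing Implicit Defensive.
Import Order.TTheory GRing.Theory Num.Theory.
Local Open Scope ring_scope.

(* The n x n matrix whose top-left 2x2 block is [[a, b], [c, d]] and whose
   other entries are 0; used with n = 2 (after k = 1 is established). *)
Definition mx2 (R : ringType) (n : nat) (a b c d : R) : 'M[R]_n :=
  \matrix_(i < n, j < n)
    if ((i : nat) == 0%N) && ((j : nat) == 0%N) then a
    else if ((i : nat) == 0%N) && ((j : nat) == 1%N) then b
    else if ((i : nat) == 1%N) && ((j : nat) == 0%N) then c
    else if ((i : nat) == 1%N) && ((j : nat) == 1%N) then d
    else 0.

(* A = diag(-alpha_1^2, ..., -alpha_n^2), with alpha indexed from 0. *)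
Definition diag_negsq (R : ringType) (n : nat) (al : nat -> R) : 'M[R]_n :=
  diag_mx (\row_(i < n) - (al i) ^+ 2).

(* Main.v *)
Require Import Defs.
From HB Require Import structures.
From mathcomp Require Import all_boot all_order all_algebra.
From mathcomp Require Import reals.
From mathcomp Require Import zify.
From mathcomp.algebra_tactics Require Import ring lra.
Import Order.TTheory GRing.Theory Num.Theory.
Local Open Scope ring_scope.

Set Implicit Arguments. Unset Strict Implicit.
Lemma ordS_neq n (hn : (1 < n)%N) (l : 'I_n) : ordS l != l.
Proof.
apply/eqP => /(congr1 val) /=.
have hl := ltn_ord l.
case: (ltnP l.+1 n) => h.
  rewrite modn_small //; lia.
have -> : l.+1 = n by apply/eqP; rewrite eqn_leq h hl.
rewrite modnn => E. move: hn hl h; rewrite -E. lia.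
Qed.

Lemma c_ge (R : numDomainType) n (hn : (1 < n)%N) (b : 'I_n -> R)
  (hb : forall i, 0 <= b i) (l : 'I_n) : b (ordS l) <= \sum_m b m - b l.
Proof.
rewrite (bigD1 l) //= addrC addrK (bigD1 (ordS l)) /=; last by rewrite ordS_neq.
by rewrite lerDl sumr_ge0.
Qed.

Lemma c_gt (R : numDomainType) n (hn : (2 < n)%N) (b : 'I_n -> R)
  (hb : forall i, 0 < b i) (l : 'I_n) : b (ordS l) < \sum_m b m - b l.
Proof.
have hn1 : (1 < n)%N by lia.
have [m hm1 hm2] : exists2 m : 'I_n, m != l & m != ordS l.
  have h0 : (0 < n)%N by lia.
  have h1 : (1 < n)%N by lia.
  case E0: ((Ordinal h0 != l) && (Ordinal h0 != ordS l)).
    by case/andP: E0 => ? ?; exists (Ordinal h0).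
  case E1: ((Ordinal h1 != l) && (Ordinal h1 != ordS l)).
    by case/andP: E1 => ? ?; exists (Ordinal h1).
  exists (Ordinal hn).
  - move: E0 E1; rewrite -!val_eqE /=.
    move: (val l) (val (ordS l)) => x y. lia.
  - move: E0 E1; rewrite -!val_eqE /=.
    move: (val l) (val (ordS l)) => x y. lia.
rewrite (bigD1 l) //= addrC addrK (bigD1 (ordS l)) /=; last by rewrite ordS_neq.
rewrite ltrDl (bigD1 m) /=; last by rewrite hm1.
by apply: ltr_pwDl; [apply: hb| apply: sumr_ge0 => i _; apply: ltW].
Qed.
Lemma key (R : realFieldType) n (hn : (1 < n)%N) (b : 'I_n -> R) (P : 'M[R]_n)
 (hb : forall i, 0 < b i)
 (hrow : forall i, \sum_l P i l ^+ 2 = 1)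
 (hcol : forall l, \sum_i P i l ^+ 2 = 1)
 (heq : forall i, \sum_l (b l * P l i - b i * P i l) ^+ 2
          = (\sum_m b m) * (\sum_l b l * P l i ^+ 2 + b i)) :
 (n <= 2)%N /\ forall i l, (\sum_m b m - b l) * P l i + b i * P i l = 0.
Proof.
set S := \sum_m b m.
have cpos : forall l, 0 < S - b l.
  by move=> l; apply: lt_le_trans (hb (ordS l)) (c_ge hn (fun i => ltW (hb i)) l).
have Spos : 0 < S.
  have h0 : (0 < n)%N by lia.
  by have := cpos (Ordinal h0); have := hb (Ordinal h0); lra.
have bne : forall i, b i != 0 by move=> i; rewrite gt_eqF.
have cne : forall i, S - b i != 0 by move=> i; rewrite gt_eqF.
pose T i l := b l / ((S - b l) * b i ^+ 2) * ((S - b l) * P l i + b i * P i l) ^+ 2.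
have Tge : forall i l, 0 <= T i l.
  move=> i l; rewrite /T; apply: mulr_ge0; last exact: sqr_ge0.
  by apply: divr_ge0; [exact: ltW | apply: mulr_ge0; [exact: ltW | exact: sqr_ge0]].
have Qi : forall i, \sum_l T i l = \sum_l (b l / (S - b l)) * P i l ^+ 2 - (S - b i) / b i.
  move=> i.
  rewrite (eq_bigr (fun l => (S * (b l * P l i ^+ 2) - (b l * P l i - b i * P i l)^+2
        + b i ^+ 2 * P i l ^+ 2) / b i ^+ 2 + b l / (S - b l) * P i l ^+ 2)); last first.
    move=> l _; rewrite /T; field.
    by rewrite cne bne.
  rewrite big_split /= -mulr_suml big_split /= sumrB -mulr_sumr -mulr_sumr heq hrow.
  rewrite -/S; field; exact: bne.
have Tsum : \sum_i \sum_l T i l = S * \sum_l ((S - b l)^-1 - (b l)^-1).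
  under eq_bigr do rewrite Qi.
  rewrite sumrB exchange_big /=.
  under eq_bigr do rewrite -mulr_sumr hcol mulr1.
  rewrite -sumrB mulr_sumr; apply: eq_bigr => l _.
  by rewrite /S; field; rewrite ?bne ?cne.
have Dle : \sum_l ((S - b l)^-1 - (b l)^-1) <= 0.
  rewrite sumrB subr_le0 [X in _ <= X](reindex_inj (@ordS_inj n)) /=.
  apply: ler_sum => l _; rewrite lef_pV2 ?posrE ?hb ?cpos //.
  exact: (c_ge hn (fun i => ltW (hb i)) l).
have Tz : \sum_i \sum_l T i l = 0.
  apply/eqP; rewrite eq_le; apply/andP; split.
    by rewrite Tsum; apply: mulr_ge0_le0 => //; apply: sumr_ge0 => i _; exact: ltW.
  by apply: sumr_ge0 => i _; apply: sumr_ge0.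
split.
  rewrite leqNgt; apply/negP => hn3.
  have : \sum_l ((S - b l)^-1 - (b l)^-1) < 0.
    rewrite sumrB subr_lt0 [X in _ < X](reindex_inj (@ordS_inj n)) /=.
    apply: ltr_sum.
      by apply/hasP; exists (Ordinal (ltn_trans (isT : (0 < 1)%N) hn)); rewrite ?mem_index_enum.
    move=> l _; rewrite ltf_pV2 ?posrE ?hb ?cpos //.
    exact: (c_gt hn3 hb l).
  move=> Dlt.
  have : S * \sum_l ((S - b l)^-1 - (b l)^-1) < 0 by rewrite (pmulr_rlt0 _ Spos).
  by rewrite -Tsum Tz ltxx.
move=> i l.
have h1 : forall j, \sum_l T j l = 0.
  move=> j; apply: (psumr_eq0P _ Tz) => // j' _; exact: sumr_ge0.
have h2 : T i l = 0.
  by apply: (psumr_eq0P _ (h1 i)) => // j' _.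
move: h2; rewrite /T => /eqP; rewrite mulf_eq0 => /orP [|].
  rewrite mulf_eq0 invr_eq0 mulf_eq0 expf_eq0 /= (negbTE (bne l)) (negbTE (cne l)).
  by rewrite (negbTE (bne i)).
by rewrite expf_eq0 /= => /eqP.
Qed.

Unset Implicit Arguments. Set Strict Implicit.

Theorem lemma4p3 (R : realType) (k : nat) (hk : (1 <= k)%N)
  (K P : 'M[R]_(2 * k)) (al : nat -> R) (alpha : R)
  (hal : forall i : nat, (i < 2 * k)%N -> al i != 0)
  (hKskew : K^T = - K) (hKinv : K \in unitmx)
  (hPorth : P^T *m P = 1%:M)
  (halpha : alpha = Num.sqrt (\sum_(i < 2 * k) al i ^+ 2) \/
            alpha = - Num.sqrt (\sum_(i < 2 * k) al i ^+ 2))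
  (h1 : K *m K = invmx P *m diag_negsq (2 * k) al *m P + diag_negsq (2 * k) al)
  (h2 : alpha *: K = diag_negsq (2 * k) al *m P - invmx P *m diag_negsq (2 * k) al) :
  k = 1%N /\
  exists eps eta : R, (eps = 1 \/ eps = -1) /\ (eta = 1 \/ eta = -1) /\
    diag_negsq (2 * k) al = mx2 (2 * k) (- al 0%N ^+ 2) 0 0 (- al 1%N ^+ 2) /\
    K = mx2 (2 * k) 0 (eps * Num.sqrt (al 0%N ^+ 2 + al 1%N ^+ 2))
                      (- (eps * Num.sqrt (al 0%N ^+ 2 + al 1%N ^+ 2))) 0 /\
    P = mx2 (2 * k) 0 (- (eta * eps)) (eta * eps) 0.
Proof.
have hn : (1 < 2 * k)%N by lia.
have hPunit : P \in unitmx := (mulmx1_unit hPorth).2.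
have hinv : invmx P = P^T by rewrite -[invmx P]mul1mx -hPorth mulmxK.
have hPPT : P *m P^T = 1%:M := mulmx1C hPorth.
have hcol : forall l, \sum_i P i l ^+ 2 = 1.
  move=> l; have := congr1 (fun M : 'M[R]_(2 * k) => M l l) hPorth; rewrite !mxE eqxx /= mulr1n => H; rewrite -[RHS]H.
  by apply: eq_bigr => i _; rewrite mxE expr2.
have hrow : forall i, \sum_l P i l ^+ 2 = 1.
  move=> i; have := congr1 (fun M : 'M[R]_(2 * k) => M i i) hPPT; rewrite !mxE eqxx /= mulr1n => H; rewrite -[RHS]H.
  by apply: eq_bigr => l _; rewrite mxE expr2.
pose b (i : 'I_(2 * k)) := al i ^+ 2.
have hb : forall i, 0 < b i.
  move=> i; rewrite /b lt_def sqr_ge0 andbT expf_neq0 //; exact: hal.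
have hS : alpha ^+ 2 = \sum_m b m.
  have h0 : 0 <= \sum_m b m by apply: sumr_ge0 => i _; exact: ltW.
  by case: halpha => ->; rewrite ?sqrrN sqr_sqrtr.
have heq : forall i, \sum_l (b l * P l i - b i * P i l) ^+ 2
          = (\sum_m b m) * (\sum_l b l * P l i ^+ 2 + b i).
  move=> i.
  have E : (alpha *: K) *m (alpha *: K) = alpha ^+ 2 *: (K *m K).
    by rewrite -scalemxAl -scalemxAr scalerA expr2.
  rewrite h2 h1 hinv /diag_negsq mul_diag_mx mul_mx_diag in E.
  have := congr1 (fun M : 'M[R]_(2 * k) => M i i) E; rewrite !mxE /= eqxx mulr1n.
  under eq_bigr do rewrite !mxE.
  under [X in _ = _ * (X + _)]eq_bigr do rewrite !mxE.
  move=> H; rewrite -hS.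
  have e1 : \sum_l (b l * P l i - b i * P i l)^+2 = - \sum_j (- al i ^+ 2 * P i j - P j i * - al j ^+ 2) * (- al j ^+ 2 * P j i - P i j * - al i ^+ 2).
    rewrite -sumrN; apply: eq_bigr => j _; rewrite /b; ring.
  have e2 : \sum_l b l * P l i ^+ 2 = - \sum_j P j i * - al j ^+ 2 * P j i.
    rewrite -sumrN; apply: eq_bigr => j _; rewrite /b; ring.
  rewrite e1 e2 H /b; ring.
have [hn2 Z] := key hn hb hrow hcol heq.
have k1 : k = 1%N by lia.
split; first exact: k1.
have Spos : 0 < \sum_m b m.
  rewrite (bigD1 (Ordinal (ltnW hn))) //=; apply: (lt_le_trans (hb (Ordinal (ltnW hn)))).
  by rewrite lerDl; apply: sumr_ge0 => i _; exact: ltW.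
have anz : alpha != 0.
  by apply/eqP => a0; move: Spos; rewrite -hS a0 expr0n /= ltxx.
have hK : forall i j, K i j = (- al i ^+ 2 * P i j - P j i * - al j ^+ 2) / alpha.
  move=> i j; have := congr1 (fun M : 'M[R]_(2 * k) => M i j) h2.
  rewrite hinv /diag_negsq mul_diag_mx mul_mx_diag !mxE => <-.
  by field.
have hbdef : forall i, b i = al i ^+ 2 by [].
clearbody b. subst k.
pose o0 := @Ordinal (2 * 1) 0 isT.
pose o1 := @Ordinal (2 * 1) 1 isT.
have ordP : forall i : 'I_(2 * 1), i = o0 \/ i = o1.
  by move=> [[|[|m]] Hm]; [left; apply: val_inj | right; apply: val_inj | ].
have sum2 : forall F : 'I_(2 * 1) -> R, \sum_i F i = F o0 + F o1.
  move=> F; rewrite (bigD1 o0) // (bigD1 o1) // big1; first by rewrite /= addr0.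
  by move=> i; case: (ordP i) => -> /andP [].
have hSb : \sum_m b m = al 0%N ^+ 2 + al 1%N ^+ 2 by rewrite sum2 !hbdef.
rewrite hSb in Spos Z.
have b0 : 0 < al 0%N ^+ 2 by rewrite -(hbdef o0).
have b1 : 0 < al 1%N ^+ 2 by rewrite -(hbdef o1).
have P00 : P o0 o0 = 0.
  have := Z o0 o0; rewrite !hbdef /= => H.
  have : (al 0%N ^+ 2 + al 1%N ^+ 2) * P o0 o0 = 0 by rewrite -H; ring.
  by move/eqP; rewrite mulf_eq0 gt_eqF //= => /eqP.
have P11 : P o1 o1 = 0.
  have := Z o1 o1; rewrite !hbdef /= => H.
  have : (al 0%N ^+ 2 + al 1%N ^+ 2) * P o1 o1 = 0 by rewrite -H; ring.
  by move/eqP; rewrite mulf_eq0 gt_eqF //= => /eqP.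
have P01 : P o0 o1 = - P o1 o0.
  have := Z o0 o1; rewrite !hbdef /= => H.
  have : (al 0%N ^+ 2) * (P o0 o1 + P o1 o0) = 0 by rewrite -H; ring.
  move/eqP; rewrite mulf_eq0 gt_eqF //= addr_eq0 => /eqP //.
have hs : P o1 o0 = 1 \/ P o1 o0 = -1.
  have := hcol o0; rewrite sum2 P00 expr0n /= add0r => /eqP.
  by rewrite sqrf_eq1 => /orP [] /eqP; [left|right].
set s := P o1 o0 in hs P01.
set r := Num.sqrt (al 0%N ^+ 2 + al 1%N ^+ 2).
have rpos : 0 < r by rewrite sqrtr_gt0; lra.
have hr2 : r ^+ 2 = al 0%N ^+ 2 + al 1%N ^+ 2 by rewrite sqr_sqrtr //; lra.
have e0 : al 0%N ^+ 2 = r ^+ 2 - al 1%N ^+ 2 by rewrite hr2; ring.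
have [u hu hau] : exists2 u : R, (u = 1 \/ u = -1) & alpha = u * r.
  by case: halpha; rewrite sum2 /= => ->; [exists 1; [left|rewrite mul1r] | exists (-1); [right|rewrite mulN1r]].
exists (s * u), u; split.
  by case: hs => ->; case: hu => ->; rewrite ?mul1r ?mulN1r ?opprK; [left|right|right|left].
split; first exact: hu.
split.
  apply/matrixP => i j; rewrite /diag_negsq !mxE.
  by case: (ordP i) => ->; case: (ordP j) => ->; rewrite /= ?mulr1n ?mulr0n.
split.
  apply/matrixP => i j; rewrite hK hau !mxE -/r.
  case: (ordP i) => ->; case: (ordP j) => ->; rewrite /= ?P00 ?P11 ?P01 -/s;
  (case: hu => ->; try rewrite e0; field; by rewrite ?mul1r ?mulN1r ?oppr_eq0 gt_eqF).
apply/matrixP => i j; rewrite !mxE.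
case: (ordP i) => ->; case: (ordP j) => ->; rewrite /= ?P00 ?P11 ?P01 -/s;
  (case: hu => hu'; rewrite ?hu'; ring).
Qed.
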